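(* Let $\{X_i\}_{i\ge1}$ be i.i.d. real random variables with a unimodal density $f$ satisfying $\sup_{x\in\mathbb R}f(x)\le C_0$ for some constant $C_0>0$, and let $f_n$ denote the density of $\sum_{i=1}^nX_i$. Then there is a constant $C>0$ such that $\sup_{n\ge1}\sup_{x\in\mathbb R}f_n(x)\le C$. Moreover, if $N$ is a $\{1,2,\dots\}$-valued random variable independent of $\{X_i\}$ and $f_N$ denotes the density of $\sum_{i=1}^NX_i$, then $\sup_{x\in\mathbb R}f_N(x)\le C$. *)

(* Defs.v *)
From HB Require Import structures.
From mathcomp Require Import all_boot all_order all_algebra.
From mathcomp Require Import all_classical all_reals all_analysis.
Set Implicit Arguments. Unset Strict Implicit. Unset Printing Implicit Defensive.
Import Order.TTheory GRing.Theory Num.Theory.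
Local Open Scope classical_set_scope.
Local Open Scope ring_scope.

Definition real_rv (d : measure_display) (T : measurableType d) (R : realType)
  (Y : T -> R) : Prop := measurable_fun setT Y.

Definition mutually_indep (d : measure_display) (T : measurableType d)
  (R : realType) (P : probability T R) (I : eqType) (Y : I -> T -> R) : Prop :=
  forall (J : seq I) (B : I -> set R), uniq J ->
    (forall i, measurable (B i)) ->
    P (\big[setI/setT]_(i <- J) (Y i @^-1` B i)) =
    (\prod_(i <- J) P (Y i @^-1` B i))%E.

Definition is_density (d : measure_display) (T : measurableType d)
  (R : realType) (P : probability T R) (Y : T -> R) (g : R -> R) : Prop :=
  measurable_fun setT g /\ (forall x, 0 <= g x) /\
  forall A : set R, measurable A ->
    P (Y @^-1` A) = (\int[@lebesgue_measure R]_(x in A) (g x)%:E)%E.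

Definition unimodal (R : realType) (f : R -> R) : Prop :=
  exists m : R,
    (forall x y, x <= y -> y <= m -> f x <= f y) /\
    (forall x y, m <= x -> x <= y -> f y <= f x).

(* Partial sum S_n = X_1 + ... + X_n (sequence indexed from 0: X 0 is X_1). *)
Definition psum (T : Type) (R : realType) (X : nat -> T -> R) (n : nat) : T -> R :=
  fun t => \sum_(i < n) X i t.

Definition rsum (T : Type) (R : realType) (X : nat -> T -> R) (N : T -> nat) : T -> R :=
  fun t => \sum_(i < N t) X i t.

Definition with_N (T : Type) (R : realType) (X : nat -> T -> R) (N : T -> nat)
  : option nat -> T -> R :=
  fun o => match o with None => fun t => (N t)%:R | Some i => X i end.

(* Main.v *)
Require Import Defs.
From HB Require Import structures.
From mathcomp Require Import all_boot all_order all_algebra.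
From mathcomp Require Import all_classical all_reals all_analysis measurable_realfun.
From mathcomp Require Import ring lra.
Import Order.TTheory GRing.Theory Num.Theory.
Local Open Scope classical_set_scope.
Local Open Scope ring_scope.
Set Implicit Arguments. Unset Strict Implicit.

Section PF.
Local Open Scope ereal_scope.
Context d1 d2 (T1 : measurableType d1) (T2 : measurableType d2) (R : realType).
Variables (m : {measure set T1 -> \bar R}) (f : T1 -> T2).
Definition pf (mf : measurable_fun setT f) := fun A => m (f @^-1` A).
Variable mf : measurable_fun setT f.
Let pf0 : pf mf set0 = 0.
Proof. by rewrite /pf preimage_set0 measure0. Qed.
Let pf_ge0 A : 0 <= pf mf A.
Proof. exact: measure_ge0. Qed.
Let pf_sigma_additive : semi_sigma_additive (pf mf).
Proof.
move=> F mF tF mUF; rewrite /pf preimage_bigcup.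
apply: measure_semi_sigma_additive.
- by move=> n; rewrite -[X in measurable X]setTI; exact: mf.
- apply/trivIsetP => /= i j _ _ ij; rewrite -preimage_setI.
  by move/trivIsetP : tF => /(_ _ _ _ _ ij) ->//; rewrite preimage_set0.
- by rewrite -preimage_bigcup -[X in measurable X]setTI; exact: mf.
Qed.
HB.instance Definition _ := isMeasure.Build _ _ _
  (pf mf) pf0 pf_ge0 pf_sigma_additive.
End PF.

Section RU.
Local Open Scope ereal_scope.
Context (R : realType).
Lemma rect_unique (m1 m2 : {measure set (R * R) -> \bar R}) :
  m1 setT < +oo ->
  (forall A B, measurable A -> measurable B -> m1 (A `*` B) = m2 (A `*` B)) ->
  forall E, measurable E -> m1 E = m2 E.
Proof.
move=> m1oo m12 E mE.
pose C : set (set (R * R)) :=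
  [set C | exists A, measurable A /\ exists B, measurable B /\ C = A `*` B].
have CI : setI_closed C.
  move=> /= _ _ [X1 [mX1 [X2 [mX2 ->]]]] [Y1 [mY1 [Y2 [mY2 ->]]]].
  rewrite -setXI; exists (X1 `&` Y1); split; first exact: measurableI.
  by exists (X2 `&` Y2); split => //; exact: measurableI.
apply: (measure_unique C (fun n => setT)) => //.
- rewrite measurable_prod_measurableType //; congr (<<s _ >>).
  rewrite predeqE; split => [[A mA [B mB <-]]|[A [mA [B [mB ->]]]]].
    by exists A; split => //; exists B.
  by exists A => //; exists B.
- by move=> n; exists setT; split => //; exists setT; split => //; rewrite setXTT.
- by rewrite bigcup_const.
- by move=> A [A1 [mA1 [A2 [mA2 ->]]]]; exact: m12.
Qed.
End RU.
Lemma lebesgue_shift (R : realType) (s : R) (A : set R) : measurable A ->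
  lebesgue_measure ((fun y => s + y) @^-1` A) = lebesgue_measure A.
Proof.
move=> mA.
have ms : measurable_fun [set: measurableTypeR R] ((fun y => s + y) : _ -> measurableTypeR R).
  by apply: measurable_funD.
rewrite (@lebesgue_measure_unique R (pf lebesgue_measure ms) _ A mA) //.
move=> _ [[x1 x2] _ <-] /=.
rewrite /pf /=.
have -> : (fun y => s + y) @^-1` `]x1, x2]%classic = `](x1 - s), (x2 - s)]%classic.
  by apply/seteqP; split => y /=; rewrite !in_itv /= ltrBlDl lerBrDl.
rewrite !lebesgue_measure_itv /= !lte_fin ltrD2r.
case: ifPn => // _; rewrite -!EFinB; congr EFin; ring.
Qed.

Section Main.
Local Open Scope ereal_scope.
Context d (T : measurableType d) (R : realType) (P : probability T R).
Context (I : eqType) (Z : I -> T -> R) (idx : nat -> I).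
Hypothesis mZ : forall i, measurable_fun setT (Z i).
Hypothesis indZ : mutually_indep P Z.
Hypothesis idx_inj : injective idx.
Let Xs := fun n => Z (idx n).

Definition cyl (J : seq I) (B : I -> set R) :=
  \big[setI/setT]_(i <- J) (Z i @^-1` B i).

Lemma cyl_meas J B : (forall i, measurable (B i)) -> measurable (cyl J B).
Proof.
move=> mB; elim: J => [|j J IH]; rewrite /cyl ?big_nil ?big_cons //.
apply: measurableI => //; rewrite -[X in measurable X]setTI; exact: mZ.
Qed.

Lemma psumS m : psum Xs m.+1 = (psum Xs m \+ Xs m)%R.
Proof. by apply/funext => t; rewrite /psum big_ord_recr. Qed.

Lemma psum_meas m : measurable_fun setT (psum Xs m).
Proof.
elim: m => [|m IH].
  rewrite (_ : psum Xs 0 = cst 0%R) //.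
  by apply/funext => t; rewrite /psum big_ord0.
by rewrite psumS; apply: measurable_funD => //; exact: mZ.
Qed.


Lemma fin_P (A : set T) : measurable A -> P A \is a fin_num.
Proof.
move=> mA; rewrite ge0_fin_numE ?measure_ge0 //.
by apply: (le_lt_trans (probability_le1 P mA)); rewrite ltry.
Qed.

Let upd (B : I -> set R) (k : I) (D2 : set R) := fun i => if i == k then D2 else B i.

Lemma cyl_cons J B k D2 : k \notin J ->
  cyl (k :: J) (upd B k D2) = Z k @^-1` D2 `&` cyl J B.
Proof.
move=> kJ; rewrite /cyl big_cons /upd eqxx; congr (_ `&` _).
apply: eq_big_seq => i iJ; case: eqP => // ik.
by move: kJ; rewrite -ik iJ.
Qed.

Lemma prob_cons J B k D2 : uniq J -> k \notin J -> (forall i, measurable (B i)) ->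
  measurable D2 ->
  P (cyl (k :: J) (upd B k D2)) = P (Z k @^-1` D2) * P (cyl J B).
Proof.
move=> uJ kJ mB mD2.
have mB' : forall i, measurable (upd B k D2 i) by move=> i; rewrite /upd; case: eqP.
rewrite /cyl indZ //=; last by rewrite kJ.
rewrite big_cons /upd eqxx indZ //; congr (_ * _).
apply: eq_big_seq => i iJ; case: eqP => // ik.
by move: kJ; rewrite -ik iJ.
Qed.

Lemma indep_psum m : forall J B D, uniq J -> (forall i, measurable (B i)) ->
  measurable D -> (forall j, (j < m)%N -> idx j \notin J) ->
  P (psum Xs m @^-1` D `&` cyl J B) = P (psum Xs m @^-1` D) * P (cyl J B).
Proof.
elim: m => [|m IH] J B D uJ mB mD nJ.
  have [D0|D0] := pselect (D 0%R).
    rewrite (_ : psum Xs 0 @^-1` D = setT); last first.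
      by apply/seteqP; split => t //= _; rewrite /psum big_ord0.
    by rewrite setTI probability_setT mul1e.
  rewrite (_ : psum Xs 0 @^-1` D = set0); last first.
    by apply/seteqP; split => t //=; rewrite /psum big_ord0.
  by rewrite set0I measure0 mul0e.
set S := psum Xs m; set Y := Xs m.
have mS : measurable_fun setT S := psum_meas m.
have mY : measurable_fun setT Y := mZ _.
have mphi : measurable_fun setT (fun t => (S t, Y t)) := measurable_fun_pair mS mY.
have mC := cyl_meas J mB.
have mJ : idx m \notin J by apply: nJ.
pose c : {nonneg R} := NngNum (fine_ge0 (measure_ge0 P (cyl J B))).
have cE : (c%:num)%:E = P (cyl J B) by rewrite /= fineK ?fin_P.
pose m1 := pf (mrestr P mC) mphi.
pose m2 := mscale c (pf P mphi).
have m1E : forall E, (m1 : {measure set (R * R) -> \bar R}) E = P ((fun t => (S t, Y t)) @^-1` E `&` cyl J B) by [].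
have m2E : forall E, (m2 : {measure set (R * R) -> \bar R}) E = P (cyl J B) * P ((fun t => (S t, Y t)) @^-1` E).
  by move=> E; rewrite -cE.
have key D1 D2 : measurable D1 -> measurable D2 ->
    P (S @^-1` D1 `&` Y @^-1` D2) = P (S @^-1` D1) * P (Y @^-1` D2).
  move=> mD1 mD2.
  have := IH [:: idx m] (upd B (idx m) D2) D1 isT.
  rewrite cyl_cons // /cyl big_nil setIT.
  apply => //; first by move=> i; rewrite /upd; case: eqP.
  by move=> j jm; rewrite inE; apply/negP => /eqP/idx_inj ej; rewrite ej ltnn in jm.
have E12 : forall E, measurable E ->
    (m1 : {measure set (R * R) -> \bar R}) E = (m2 : {measure set (R * R) -> \bar R}) E.
  apply: (@rect_unique R m1 m2).
    rewrite m1E; apply: (le_lt_trans (probability_le1 P _)) => //.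
      by rewrite preimage_setT setTI.
    by rewrite ltry.
  move=> D1 D2 mD1 mD2.
  rewrite m1E m2E.
  rewrite (_ : (fun t => (S t, Y t)) @^-1` (D1 `*` D2) = S @^-1` D1 `&` Y @^-1` D2) //.
  rewrite key // -setIA -cyl_cons //.
  rewrite IH //; last first.
  - move=> j jm; rewrite inE negb_or nJ ?andbT; last by apply: ltnW.
    by apply/negP => /eqP/idx_inj jm'; move: jm; rewrite jm' ltnn.
  - by move=> i; rewrite /upd; case: eqP.
  - by rewrite /= mJ.
  rewrite prob_cons //.
  by rewrite muleA [RHS]muleC.
have mED : measurable ((fun p : R * R => p.1 + p.2)%R @^-1` D).
  rewrite -[X in measurable X]setTI.
  exact: (@measurable_funD _ _ R setT fst snd measurable_fst measurable_snd measurableT D mD).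
have := E12 _ mED.
rewrite m1E m2E.
by rewrite psumS => ->; rewrite muleC.
Qed.

Lemma indep_pair m D1 D2 : measurable D1 -> measurable D2 ->
  P (psum Xs m @^-1` D1 `&` Xs m @^-1` D2) =
  P (psum Xs m @^-1` D1) * P (Xs m @^-1` D2).
Proof.
move=> mD1 mD2.
have := @indep_psum m [:: idx m] (upd (fun=> setT) (idx m) D2) D1 isT.
rewrite cyl_cons // /cyl big_nil setIT.
apply => //; first by move=> i; rewrite /upd; case: eqP.
by move=> j jm; rewrite inE; apply/negP => /eqP/idx_inj ej; rewrite ej ltnn in jm.
Qed.

Lemma bound_psum m (f : R -> R) (C0 : R) : is_density P (Xs m) f ->
  (forall x, f x <= C0)%R -> forall A, measurable A ->
  P (psum Xs m.+1 @^-1` A) <= C0%:E * lebesgue_measure A.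
Proof.
move=> [mf [f0 fD]] fC A mA.
set S := psum Xs m; set Y := Xs m.
have mS : measurable_fun setT S := psum_meas m.
have mY : measurable_fun setT Y := mZ _.
have mphi : measurable_fun setT (fun t => (S t, Y t)) := measurable_fun_pair mS mY.
pose muS := distribution P (mfun_Sub (mem_set mS)).
pose muY := distribution P (mfun_Sub (mem_set mY)).
pose tau := pf P mphi.
have tauE : forall E, measurable E ->
    (muS \x muY) E = (tau : {measure set (R * R) -> \bar R}) E.
  move=> E mE; apply: product_measure_unique => // D1 D2 mD1 mD2.
  rewrite /tau /pf /muS /muY /distribution /pushforward /=.
  exact: indep_pair.
have mED : measurable ((fun p : R * R => p.1 + p.2)%R @^-1` A).
  rewrite -[X in measurable X]setTI.
  exact: (@measurable_funD _ _ R setT fst snd measurable_fst measurable_snd measurableT A mA).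
have -> : P (psum Xs m.+1 @^-1` A) =
    (tau : {measure set (R * R) -> \bar R}) ((fun p : R * R => p.1 + p.2)%R @^-1` A).
  by rewrite psumS.
rewrite -tauE //.
have C00 : (0 <= C0)%R by apply: le_trans (f0 0%R) (fC 0%R).
have -> : (muS \x muY) ((fun p : R * R => p.1 + p.2)%R @^-1` A) =
   \int[muS]_s (muY \o xsection ((fun p : R * R => p.1 + p.2)%R @^-1` A)) s by [].
apply: le_trans (@ge0_le_integral _ _ _ muS setT measurableT _
   (cst (C0%:E * lebesgue_measure A)) _ (measurable_fun_xsection (T1:=R) muY mED) _ _) _.
- by move=> x _; exact: measure_ge0.
- exact: measurable_cst.
- move=> s _ /=.
  have msA : measurable ((fun y => s + y)%R @^-1` A).
    rewrite -[X in measurable X]setTI.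
    by apply: (@measurable_funD _ _ R setT (cst s) id) => //.
  have -> : xsection ((fun p : R * R => p.1 + p.2)%R @^-1` A) s = (fun y => s + y)%R @^-1` A.
    by apply/seteqP; split => y; rewrite /xsection /= inE.
  rewrite /muY /distribution /pushforward /= fD //.
  rewrite -(lebesgue_shift s mA) -integral_cst //.
  apply: ge0_le_integral => //.
  + by move=> x _; rewrite lee_fin.
  + by apply/measurable_EFinP; apply: measurable_funTS.
  + by move=> x _; rewrite lee_fin.
rewrite integral_cst // [X in _ * X <= _](_ : _ = 1) ?mule1 //.
exact: (probability_setT (distribution P (mfun_Sub (mem_set mS)))).
Qed.

End Main.

Section AE.
Local Open Scope ereal_scope.
Context d (T : measurableType d) (R : realType) (P : probability T R).

Lemma ae_bound (Y : T -> R) (g : R -> R) (C0 : R) : (0 < C0)%R ->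
  (forall A, measurable A -> measurable (Y @^-1` A)) ->
  is_density P Y g ->
  (forall A, measurable A -> P (Y @^-1` A) <= C0%:E * lebesgue_measure A) ->
  {ae @lebesgue_measure R, forall x, (g x <= 2 * C0)%R}.
Proof.
move=> C0pos mYA [mg [g0 gD]] HY.
pose A := g @^-1` `](2 * C0)%R, +oo[%classic.
have mA : measurable A.
  by rewrite /A -[X in measurable X]setTI; apply: mg => //; exact: measurable_itv.
exists A; split => //; last first.
  move=> x /= /negP; rewrite /A /= in_itv /= andbT ltNge.
  by [].
set L := lebesgue_measure A.
have L0 : 0 <= L by exact: measure_ge0.
have h0 : (2 * C0)%:E * L <= P (Y @^-1` A).
  rewrite gD // -integral_cst //.
  apply: ge0_le_integral => //.
  - by move=> x _; rewrite lee_fin; apply: mulr_ge0 => //; exact: ltW.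
  - by apply/measurable_EFinP; apply: measurable_funTS.
  - by move=> x; rewrite /A /= in_itv /= andbT lee_fin => /ltW.
have h1 : (2 * C0)%:E * L <= 1.
  apply: le_trans h0 _; apply: probability_le1.
  exact: mYA.
have h2 : (2 * C0)%:E * L <= C0%:E * L := le_trans h0 (HY _ mA).
clear h0; move: L L0 h1 h2 => [r| |] //.
  rewrite !lee_fin => r0 h1 h2.
  have : (r <= 0)%R by nra.
  by move=> r_le0; congr EFin; apply/eqP; rewrite eq_le r_le0 r0.
by move=> _; rewrite mulry gtr0_sg ?mul1e // mulr_gt0.
Qed.
End AE.

Unset Implicit Arguments. Set Strict Implicit.

Theorem lemmaA3 (d : measure_display) (T : measurableType d) (R : realType)
  (P : probability T R) (X : nat -> T -> R) (f : R -> R) (C0 : R) :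
  (forall i, real_rv (X i)) ->
  mutually_indep P X ->
  (forall i, is_density P (X i) f) ->
  unimodal f ->
  0 < C0 -> (forall x, f x <= C0) ->
  exists C : R, 0 < C /\
    (forall (n : nat) (g : R -> R), (1 <= n)%N ->
       is_density P (psum X n) g ->
       {ae @lebesgue_measure R, forall x, g x <= C}) /\
    (forall (N : T -> nat) (g : R -> R),
       real_rv (fun t => (N t)%:R : R) ->
       (forall t, (1 <= N t)%N) ->
       mutually_indep P (with_N X N) ->
       is_density P (rsum X N) g ->
       {ae @lebesgue_measure R, forall x, g x <= C}).
Proof.
move=> mX indX dens _ C0pos fC.
have inj_id : injective (@id nat) by [].
exists (2 * C0); split; first by rewrite mulr_gt0.
split.
  move=> [|m] g // _ dg.
  apply: (ae_bound C0pos _ dg).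
    move=> A mA; rewrite -[X in measurable X]setTI.
    exact: (psum_meas id mX m.+1 measurableT mA).
  move=> A mA.
  exact: (bound_psum (idx := id) mX indX inj_id (dens m) fC mA).
move=> N g mN N1 indN dg.
pose Z := with_N X N.
have mZ : forall i, measurable_fun setT (Z i) by case.
pose Nk k := (fun t => (N t)%:R : R) @^-1` [set k%:R].
have mNk k : measurable (Nk k).
  by rewrite -[X in measurable X]setTI; apply: mN => //; exact: measurable_set1.
have NkE k t : Nk k t <-> N t = k.
  by rewrite /Nk /=; split => [/eqP|->//]; rewrite eqr_nat => /eqP.
pose E A k := psum X k @^-1` A `&` Nk k.
have rsumE A : rsum X N @^-1` A = \bigcup_k E A k.
  apply/seteqP; split => t /=.
    by move=> At; exists (N t) => //; split.
  by move=> [k _ [At /NkE Nt]]; rewrite /rsum Nt.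
have mE A k : measurable A -> measurable (E A k).
  move=> mA; apply: measurableI => //.
  rewrite -[X in measurable X]setTI.
  exact: (psum_meas Some mZ k measurableT mA).
have mrs A : measurable A -> measurable (rsum X N @^-1` A).
  by move=> mA; rewrite rsumE; apply: bigcupT_measurable => k; exact: mE.
have tE A : trivIset setT (E A).
  apply/trivIsetP => i j _ _ ij; apply/seteqP; split => [t [[_ /NkE ti] [_ /NkE tj]]|t //].
  by rewrite -ti -tj eqxx in ij.
have tN : trivIset setT Nk.
  apply/trivIsetP => i j _ _ ij; apply/seteqP; split => [t [/NkE ti /NkE tj]|t //].
  by rewrite -ti -tj eqxx in ij.
apply: (ae_bound C0pos mrs dg) => A mA.
have c0 : (0 <= C0%:E * lebesgue_measure A)%E.
  by apply: mule_ge0; [rewrite lee_fin ltW|exact: measure_ge0].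
have hk k : (P (E A k) <= (C0%:E * lebesgue_measure A) * P (Nk k))%E.
  case: k => [|k].
    rewrite (_ : E A 0 = set0) ?measure0; first exact: mule_ge0 c0 (measure_ge0 _ _).
    by apply/seteqP; split => t // [_ /NkE N0]; move: (N1 t); rewrite N0.
  have := @indep_psum d T R P _ Z Some mZ indN Some_inj k.+1 [:: None]
    (fun _ => [set k.+1%:R]) A isT (fun _ => measurable_set1 _) mA.
  rewrite /cyl big_cons big_nil setIT => ->; last first.
    by move=> j _; rewrite inE.
  apply: lee_wpmul2r; first exact: measure_ge0.
  exact: (@bound_psum d T R P _ Z Some mZ indN Some_inj k _ _ (dens k) fC A mA).
rewrite rsumE measure_bigcup //; last by move=> k _; exact: mE.
move: c0 hk; case HL: (lebesgue_measure A) => [r| |] c0 hk; last first.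
- by move: c0; rewrite mulrNy gtr0_sg ?mul1e.
- by rewrite mulry gtr0_sg ?mul1e ?leey.
apply: (le_trans (lee_nneseries _ _)).
- by move=> i _ _; exact: measure_ge0.
- by move=> i _; exact: hk.
rewrite -EFinM nneseriesZl; last by move=> i _; exact: measure_ge0.
rewrite -measure_bigcup //.
rewrite (_ : \bigcup_n Nk n = setT).
  rewrite [X in (_ * X <= _)%E](_ : _ = 1%E) ?mule1 //; exact: probability_setT.
by apply/seteqP; split => t // _; exists (N t) => //; exact/NkE.
Qed.
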